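(* Let $M$ be a set of $m$ sources and $N$ a set of $n$ sinks, let $\mathbf{d}:M\to\mathbb{Z}_{\ge0}$ satisfy $n = 1+\sum_{\mu}\mathbf{d}(\mu)$, and let $P_{\mathbf{d}}$ be the transportation polytope with supply $\mathbf{m}(\mu)=1+m\,\mathbf{d}(\mu)$ and demand $\mathbf{n}(\nu)=m$. If at least two sources $\mu$ satisfy $\mathbf{d}(\mu)\ge 1$, then $P_{\mathbf{d}}$ has exactly $mn$ facets.
   Context: The transportation polytope with supply $\mathbf{m}$ and demand $\mathbf{n}$ (equal totals) is $\{x\in\mathbb{R}_{\ge0}^{M\times N} : \sum_\nu x_{\mu,\nu}=\mathbf{m}(\mu)\ \forall\mu,\ \sum_\mu x_{\mu,\nu}=\mathbf{n}(\nu)\ \forall\nu\}$. *)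

(* Defs.v *)
From HB Require Import structures.
From mathcomp Require Import all_boot all_order all_algebra.
Set Implicit Arguments. Unset Strict Implicit. Unset Printing Implicit Defensive.
Import Order.TTheory GRing.Theory Num.Theory.
Local Open Scope ring_scope.

Section Polytope.
Variables (R : realFieldType) (m n : nat).
Notation pt := 'M[R]_(m, n).

Definition ptset := pt -> Prop.

Definition pairing (c x : pt) : R := \sum_(i < m) \sum_(j < n) c i j * x i j.

Definition aff_indep (s : seq pt) : Prop :=
  match s with
  | [::] => True
  | x0 :: t => free [seq y - x0 | y <- t]
  end.

Definition aff_dim_ge (S : ptset) (k : nat) : Prop :=
  exists s : seq pt, size s = k.+1 /\ (forall x, x \in s -> S x) /\ aff_indep s.

Definition aff_dim_eq (S : ptset) (k : nat) : Prop :=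
  aff_dim_ge S k /\ ~ aff_dim_ge S k.+1.

Definition is_face (P F : ptset) : Prop :=
  exists (c : pt) (b : R),
    (forall x, P x -> pairing c x <= b) /\
    (forall x, F x <-> (P x /\ pairing c x = b)).

Definition is_facet (P F : ptset) : Prop :=
  is_face P F /\ exists k : nat, aff_dim_eq P k.+1 /\ aff_dim_eq F k.

Definition num_facets_eq (P : ptset) (k : nat) : Prop :=
  exists f : 'I_k -> ptset,
    (forall i, is_facet P (f i)) /\
    (forall i j, (forall x, f i x <-> f j x) -> i = j) /\
    (forall F, is_facet P F -> exists i, forall x, F x <-> f i x).

Definition transportation_polytope (sup : 'I_m -> R) (dem : 'I_n -> R) : ptset :=
  fun x => (forall i j, 0 <= x i j) /\
           (forall i, \sum_(j < n) x i j = sup i) /\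
           (forall j, \sum_(i < m) x i j = dem j).

Definition P_d (d : 'I_m -> nat) : ptset :=
  transportation_polytope (fun i => (1 + m * d i)%:R) (fun _ => m%:R).

End Polytope.

(* Main.v *)
Require Import Defs.
From HB Require Import structures.
From mathcomp Require Import all_boot all_order all_algebra.
From mathcomp Require Import zify ring lra.
From Stdlib Require Import Classical ClassicalEpsilon.
Import Order.TTheory GRing.Theory Num.Theory.
Set Implicit Arguments. Unset Strict Implicit. Unset Printing Implicit Defensive.
Local Open Scope ring_scope.
Section S.
Variables (R : realFieldType) (m n : nat).
Notation pt := 'M[R]_(m, n).
Implicit Types (S G : ptset R m n) (c x y : pt).
Definition pf (c : pt) : pt -> R^o := fun x => pairing c x.
Fact pf_lin c : linear (pf c).
Proof.
move=> a x y; rewrite /pf /pairing /GRing.scale /=.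
rewrite big_distrr -big_split /=; apply: eq_bigr => i _.
rewrite big_distrr -big_split /=; apply: eq_bigr => j _.
rewrite !mxE; rewrite mulrDr mulrCA.  done.
Qed.
HB.instance Definition _ c := GRing.isLinear.Build R pt R^o _ (pf c) (pf_lin c).
Definition phi c : 'Hom(pt, R^o) := linfun (pf c).
Lemma phiE c x : phi c x = pairing c x.
Proof. by rewrite /phi lfunE. Qed.
Lemma dimM : \dim (fullv : {vspace pt}) = (m * n)%N.
Proof. rewrite dimvf. exact: dim_matrix. Qed.

Lemma pairingB c x y : pairing c (x - y) = pairing c x - pairing c y.
Proof. by rewrite -!phiE linearB. Qed.
Lemma pairingD c x y : pairing c (x + y) = pairing c x + pairing c y.
Proof. by rewrite -!phiE linearD. Qed.
Lemma pairingZ c a x : pairing c (a *: x) = a * pairing c x.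
Proof. by rewrite -!phiE linearZ. Qed.
Lemma pairing_sum c I (r : seq I) (F : I -> pt) :
  pairing c (\sum_(i <- r) F i) = \sum_(i <- r) pairing c (F i).
Proof.
rewrite -phiE linear_sum; apply: eq_bigr => i _; exact: phiE.
Qed.

Lemma span_pairing0 c (X : seq pt) v :
  (forall y, y \in X -> pairing c y = 0) -> v \in <<X>>%VS -> pairing c v = 0.
Proof.
move=> H vX.
have sub : (<<X>> <= lker (phi c))%VS.
  by apply/span_subvP => y /H Hy; rewrite memv_ker phiE Hy.
have := subvP sub v vX; rewrite memv_ker phiE => /eqP //.
Qed.

Lemma free_le (X : seq pt) : free X -> (size X <= m * n)%N.
Proof.
move=> /eqP <-; rewrite -dimM; apply: dimvS; exact: subvf.
Qed.

Lemma aff_dim_bound S k : aff_dim_ge S k -> (k <= m * n)%N.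
Proof.
case=> [[|x0 t] [//= [Hs [_ Hf]]]].
by move: Hf => /free_le; rewrite size_map; case: Hs => ->.
Qed.

Lemma aff_dim_mono S k k' : aff_dim_ge S k -> (k' <= k)%N -> aff_dim_ge S k'.
Proof.
case=> [[|x0 t] [//= [Hs [HS Hf]]]] Hk.
case: Hs => Hs.
exists (x0 :: take k' t); split; first by rewrite /= size_take Hs; case: ltngtP Hk => //; lia.
split.
  move=> x; rewrite inE => /orP [/eqP ->|xt]; apply: HS; first by rewrite inE eqxx.
  by rewrite inE (mem_take xt) orbT.
rewrite /=; move: Hf; rewrite -{1}(cat_take_drop k' t) map_cat.
exact: catl_free.
Qed.

Lemma aff_dim_sub S G k : (forall x, S x -> G x) -> aff_dim_ge S k -> aff_dim_ge G k.
Proof.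
move=> H [s [Hs [HS Hf]]]; exists s; split => //; split => // x /HS; exact: H.
Qed.

Lemma lift S G c b s t :
  (forall x, G x -> S x /\ pairing c x = b) -> S s -> pairing c s != b ->
  aff_dim_ge G t -> aff_dim_ge S t.+1.
Proof.
move=> HGS Ss Hcs [[|x0 l] [//= [Hl [HG Hf]]]].
have Gx0 : G x0 by apply: HG; rewrite inE eqxx.
exists [:: x0, s & l]; split; first by case: Hl => /= ->.
split.
  move=> x; rewrite !inE => /orP [/eqP ->|/orP [/eqP ->|xl]] //.
    by case: (HGS _ Gx0).
  by case: (HGS x (HG x _)) => //; rewrite inE xl orbT.
rewrite /= free_cons Hf andbT; apply/negP => /(span_pairing0 (c := c)) H.
move: Hcs; rewrite -subr_eq0 -(proj2 (HGS _ Gx0)) -pairingB H ?eqxx //.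
move=> y /mapP [z zl ->]; rewrite pairingB.
have Gz : G z by apply: HG; rewrite inE zl orbT.
have [_ ->] := HGS z Gz.
by have [_ ->] := HGS x0 Gx0; rewrite subrr.
Qed.

Lemma ex_top (Q : nat -> Prop) N : Q 0%N -> (forall k, Q k -> (k <= N)%N) ->
  exists D, Q D /\ ~ Q D.+1.
Proof.
move=> Q0 HB.
suff: forall r j, (N - j <= r)%N -> Q j -> exists D, Q D /\ ~ Q D.+1.
  by move/(_ N 0%N); apply => //; lia.
elim=> [|r IH] j Hj Qj.
  exists j; split => // /HB; lia.
case: (classic (Q j.+1)) => H; last by exists j.
apply: (IH j.+1) => //; lia.
Qed.

Lemma free_scale (X : seq pt) (e : R) : e != 0 -> free X -> free [seq e *: x | x <- X].
Proof.
move=> e0 Hf; rewrite /free size_map.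
suff -> : <<[seq e *: x | x <- X]>>%VS = <<X>>%VS by [].
apply/eqP; rewrite eqEsubv; apply/andP; split; apply/span_subvP => y.
  by move=> /mapP [x xX ->]; apply: memvZ; apply: memv_span.
move=> yX; rewrite -[y](scalerK e0) (_ : e^-1 *: (e *: y) = e^-1 *: (e *: y)) //.
by apply: memvZ; apply: memv_span; apply: map_f.
Qed.

Lemma sum2_ge (F : 'I_m -> 'I_n -> R) i j : (forall k l, 0 <= F k l) ->
  F i j <= \sum_(k < m) \sum_(l < n) F k l.
Proof.
move=> H; rewrite (bigD1 i) //= (bigD1 j) //= -addrA lerDl.
apply: addr_ge0; apply: sumr_ge0 => *; first by [].
by apply: sumr_ge0.
Qed.

Lemma seq_ge (F : pt -> R) (s : seq pt) x : (forall y, 0 <= F y) -> x \in s ->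
  F x <= \sum_(y <- s) F y.
Proof.
move=> H; elim: s => //= y s IH; rewrite inE big_cons => /orP [/eqP ->|xs].
  by rewrite lerDl sumr_ge0.
by apply: ler_wpDl => //; apply: IH.
Qed.

Lemma pos_step (z v : pt) : (forall k l, 0 <= z k l) ->
  (forall k l, z k l = 0 -> v k l = 0) ->
  exists e, 0 < e /\ forall k l, 0 <= z k l + e * v k l.
Proof.
move=> Hz Hv.
pose T := \sum_(k < m) \sum_(l < n) `|v k l| / z k l.
have T0 : 0 <= T by apply: sumr_ge0 => k _; apply: sumr_ge0 => l _; apply: divr_ge0.
exists (1 + T)^-1; split; first by rewrite invr_gt0; lra.
move=> k l; have [z0|zn0] := eqVneq (z k l) 0.
  by rewrite z0 (Hv _ _ z0) mulr0 addr0.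
have zp : 0 < z k l by rewrite lt_def zn0 Hz.
have aT : `|v k l| / z k l <= T by apply: (sum2_ge (F := fun k l => `|v k l| / z k l)) => *; apply: divr_ge0.
set a := `|v k l| / z k l in aT.
have az : a * z k l = `|v k l| by rewrite /a divfK.
set w := (1 + T)^-1.
have w1 : w * (1 + T) = 1 by rewrite mulVf //; apply/eqP; lra.
have wp : 0 < w by rewrite invr_gt0; lra.
have vv : - `|v k l| <= v k l by have := lexx `|v k l|; rewrite ler_norml => /andP [].
have h1 : - (w * `|v k l|) <= w * v k l by rewrite -mulrN ler_wpM2l // ltW.
have h2 : a * z k l <= (1 + T) * z k l by rewrite ler_wpM2r ?(ltW zp) //; lra.
have h3 : w * (a * z k l) <= w * ((1 + T) * z k l) by rewrite ler_wpM2l // ltW.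
move: h3; rewrite [w * ((1 + T) * _)]mulrA w1 mul1r az; lra.
Qed.
End S.
Lemma sum_neq_const (R : realFieldType) p (j : 'I_p) (c : R) :
  \sum_(l < p | l != j) c = (p.-1)%:R * c.
Proof.
have H : \sum_(l < p) c = c + \sum_(l < p | l != j) c by rewrite (bigD1 j).
move: H; rewrite sumr_const card_ord -{1}(@prednK p (leq_ltn_trans (leq0n _) (ltn_ord j))) mulrSr addrC => /addrI <-.
by rewrite mulr_natl.
Qed.
Section T.
Variables (R : realFieldType) (m n : nat) (d : 'I_m -> nat).
Hypothesis hn : n = (1 + \sum_(mu < m) d mu)%N.
Hypothesis htwo : exists mu1 mu2 : 'I_m, mu1 != mu2 /\ (1 <= d mu1)%N /\ (1 <= d mu2)%N.
Notation pt := 'M[R]_(m, n).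
Definition s i : R := (1 + m * d i)%:R.
Definition rowc i : pt := \matrix_(k, l) ((k == i)%:R).
Definition colc j : pt := \matrix_(k, l) ((l == j)%:R).
Definition ent i j : pt := \matrix_(k, l) (((k == i) && (l == j))%:R).
Lemma rowcE i (x : pt) : pairing (rowc i) x = \sum_l x i l.
Proof.
rewrite /pairing (bigD1 i) //= [X in _ + X]big1 ?addr0 => [|k ki].
  by apply: eq_bigr => l _; rewrite mxE eqxx mul1r.
by apply: big1 => l _; rewrite mxE (negbTE ki) mul0r.
Qed.
Lemma colcE j (x : pt) : pairing (colc j) x = \sum_k x k j.
Proof.
rewrite /pairing; apply: eq_bigr => k _.
rewrite (bigD1 j) //= [X in _ + X]big1 ?addr0 => [|l lj]; first by rewrite mxE eqxx mul1r.
by rewrite mxE (negbTE lj) mul0r.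
Qed.
Lemma entE i j (x : pt) : pairing (ent i j) x = x i j.
Proof.
rewrite /pairing (bigD1 i) //= [X in _ + X]big1 ?addr0 => [|k ki].
  rewrite (bigD1 j) //= [X in _ + X]big1 ?addr0 => [|l lj]; first by rewrite mxE !eqxx mul1r.
  by rewrite mxE eqxx (negbTE lj) mul0r.
by apply: big1 => l _; rewrite mxE (negbTE ki) mul0r.
Qed.
Definition Pin (x : pt) := (forall k l, 0 <= x k l) /\
  (forall k, pairing (rowc k) x = s k) /\ (forall l, pairing (colc l) x = m%:R).
Lemma PE x : P_d d x <-> Pin x.
Proof.
rewrite /P_d /transportation_polytope /Pin.
split=> [[H1 [H2 H3]]|[H1 [H2 H3]]]; split => //; split => k.
- by rewrite rowcE; apply: H2.
- by rewrite colcE; apply: H3.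
- by rewrite -rowcE; apply: H2.
- by rewrite -colcE; apply: H3.
Qed.

Lemma m2 : (1 < m)%N.
Proof. case: htwo => [[a Ha] [[b Hb] [ab _]]]; move: ab; rewrite -val_eqE /=; lia. Qed.

Lemma d2 i mu : i != mu -> (d i + d mu <= \sum_(mu < m) d mu)%N.
Proof.
move=> imu; rewrite (bigD1 i) //= (bigD1 mu) /=; last by rewrite eq_sym imu.
rewrite addnA; exact: leq_addr.
Qed.

Lemma dle i : (d i + 1 <= n.-1)%N.
Proof.
case: htwo => mu1 [mu2 [ne [h1 h2]]].
rewrite hn /=.
have [e1|ne1] := eqVneq i mu1.
  have := d2 (i := i) (mu := mu2); rewrite e1 ne => /(_ isT).
  by move=> H; rewrite add0n; apply: leq_trans H; rewrite leq_add2l.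
by have := d2 ne1 => H; rewrite add0n; apply: leq_trans H; rewrite leq_add2l.
Qed.

Lemma n3 : (2 < n)%N.
Proof.
case: htwo => mu1 [mu2 [ne [h1 h2]]]; have := d2 ne; rewrite hn; lia.
Qed.

Lemma sum_s : \sum_k s k = (m * n)%:R.
Proof.
rewrite /s -natr_sum; congr _%:R; rewrite big_split /= sum1_card card_ord -big_distrr /= hn.
by rewrite mulnDr muln1.
Qed.
Lemma n0 : (0 < n)%N. Proof. by have := n3; lia. Qed.
Lemma nR0 : n%:R != 0 :> R. Proof. by rewrite pnatr_eq0 -lt0n n0. Qed.
Lemma s_pos k : 0 < s k. Proof. by rewrite /s ltr0n. Qed.
Definition u : pt := \matrix_(k, l) (s k / n%:R).
Lemma uP : Pin u.
Proof.
split; [|split].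
- by move=> k l; rewrite mxE divr_ge0 // ltW // s_pos.
- move=> k; rewrite rowcE (eq_bigr (fun _ => s k / n%:R)) => [|l _]; last by rewrite mxE.
  rewrite sumr_const card_ord -mulr_natl; field; exact: nR0.
- move=> l; rewrite colcE (eq_bigr (fun k => s k / n%:R)) => [|k _]; last by rewrite mxE.
  rewrite -mulr_suml sum_s natrM; field; exact: nR0.
Qed.
Lemma u_pos k l : 0 < u k l.
Proof. by rewrite mxE divr_gt0 ?s_pos // ltr0n n0. Qed.

Section Q.
Variables (i : 'I_m) (j : 'I_n).
Definition N1 : R := (n.-1)%:R.
Lemma N1_pos : 0 < N1. Proof. by rewrite ltr0n; have := n3; lia. Qed.
Lemma nN1 : n%:R = N1 + 1 :> R.
Proof. by rewrite /N1 -{1}(prednK n0) -addn1 natrD. Qed.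
Definition a : R := s i / N1.
Lemma a_pos : 0 < a. Proof. by rewrite divr_gt0 ?s_pos ?N1_pos. Qed.
Lemma sN1 : s i < m%:R * N1.
Proof.
rewrite /s /N1 -natrM ltr_nat; have := dle i; have := m2; nia.
Qed.
Lemma a_lt : a < m%:R.
Proof. by rewrite /a ltr_pdivrMr ?N1_pos // sN1. Qed.
Lemma aN1 : N1 * a = s i.
Proof. rewrite /a; field; by apply/eqP; have := N1_pos; lra. Qed.
Definition Sp : R := (m * n)%:R - s i.
Lemma Sp_eq : Sp = m%:R * N1 + m%:R - s i.
Proof. by rewrite /Sp natrM nN1; ring. Qed.
Lemma Sp_pos : 0 < Sp.
Proof. rewrite Sp_eq; have := sN1; have : (0 : R) < m%:R by rewrite ltr0n; have := m2; lia. lra. Qed.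
Lemma sum_except : \sum_(k < m | k != i) s k = Sp.
Proof. by rewrite /Sp -sum_s [X in _ = X - _](bigD1 i) //= addrC addrK. Qed.
Definition r (l : 'I_n) : R := if l == j then m%:R else m%:R - a.
Lemma sum_r : \sum_l r l = Sp.
Proof.
rewrite (bigD1 j) //= /r eqxx (eq_bigr (fun _ => m%:R - a)) => [|l /negbTE -> //].
rewrite sum_neq_const -/N1 mulrBr aN1 Sp_eq; ring.
Qed.
Lemma r_pos l : 0 < r l.
Proof. rewrite /r; case: (l == j); first by rewrite ltr0n; have := m2; lia. by have := a_lt; lra. Qed.
Definition q : pt := \matrix_(k, l) (if k == i then (if l == j then 0 else a) else s k * r l / Sp).
Lemma qij : q i j = 0. Proof. by rewrite mxE !eqxx. Qed.
Lemma q_pos k l : (k != i) || (l != j) -> 0 < q k l.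
Proof.
rewrite mxE; case: eqP => [_|_ _]; last by rewrite divr_gt0 ?mulr_gt0 ?s_pos ?r_pos ?Sp_pos.
by case: eqP => //= _ _; exact: a_pos.
Qed.
Lemma qP : Pin q.
Proof.
have Sp0 : Sp != 0 by have := Sp_pos; rewrite lt0r => /andP [].
split; [|split].
- move=> k l; have [->|] := eqVneq k i; last by move=> ki; apply: ltW; apply: q_pos; rewrite ki.
  have [->|lj] := eqVneq l j; first by rewrite qij.
  by apply: ltW; apply: q_pos; rewrite lj orbT.
- move=> k; rewrite rowcE; have [->|ki] := eqVneq k i.
    rewrite (bigD1 j) //= mxE !eqxx add0r (eq_bigr (fun _ => a)) => [|l lj]; last by rewrite mxE eqxx (negbTE lj).
    by rewrite sum_neq_const -/N1 aN1.
  rewrite (eq_bigr (fun l => s k / Sp * r l)) => [|l _]; last by rewrite mxE (negbTE ki) mulrAC.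
  by rewrite -big_distrr /= sum_r divfK.
- move=> l; rewrite colcE (bigD1 i) //= mxE eqxx.
  rewrite (eq_bigr (fun k => s k * (r l / Sp))) => [|k ki]; last by rewrite mxE (negbTE ki) mulrA.
  rewrite -big_distrl /= sum_except mulrCA divff // mulr1 /r.
  by case: eqP => _; [rewrite add0r | rewrite addrC subrK].
Qed.
End Q.

Definition Fij i j : ptset R m n := fun x => P_d d x /\ x i j = 0.

Lemma pairingN (c x : pt) : pairing (- c) x = - pairing c x.
Proof.
rewrite /pairing -sumrN; apply: eq_bigr => k _; rewrite -sumrN; apply: eq_bigr => l _.
by rewrite mxE mulNr.
Qed.

Lemma Fface i j : is_face (@P_d R m n d) (Fij i j).
Proof.
exists (- ent i j), 0; split.
  move=> x /PE [H _]; by rewrite pairingN entE oppr_le0.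
move=> x; rewrite pairingN entE /Fij; split => [[? ->]|[? /eqP]]; first by rewrite oppr0.
by rewrite oppr_eq0 => /eqP.
Qed.

Lemma P_step x v e : Pin x -> (forall k, pairing (rowc k) v = 0) ->
  (forall l, pairing (colc l) v = 0) -> (forall k l, 0 <= x k l + e * v k l) ->
  Pin (x + e *: v).
Proof.
move=> [H1 [H2 H3]] Hr Hc Hn; split; [|split].
- by move=> k l; rewrite !mxE.
- by move=> k; rewrite pairingD pairingZ Hr H2 mulr0 addr0.
- by move=> l; rewrite pairingD pairingZ Hc H3 mulr0 addr0.
Qed.

Lemma rowB x y k : Pin x -> Pin y -> pairing (rowc k) (x - y) = 0.
Proof. by move=> [_ [Hx _]] [_ [Hy _]]; rewrite pairingB Hx Hy subrr. Qed.
Lemma colB x y l : Pin x -> Pin y -> pairing (colc l) (x - y) = 0.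
Proof. by move=> [_ [_ Hx]] [_ [_ Hy]]; rewrite pairingB Hx Hy subrr. Qed.

Lemma dim0 (S : ptset R m n) x : S x -> aff_dim_ge S 0.
Proof.
move=> Sx; exists [:: x]; split => //; split; last exact: nil_free.
by move=> y; rewrite inE => /eqP ->.
Qed.

Lemma dimP : exists D, aff_dim_ge (@P_d R m n d) D /\ ~ aff_dim_ge (@P_d R m n d) D.+1.
Proof.
apply: (ex_top (N := (m * n)%N)); first by apply: (dim0 (x := u)); apply/PE; exact: uP.
move=> k; exact: aff_dim_bound.
Qed.

Lemma upper i j D : aff_dim_ge (Fij i j) D -> aff_dim_ge (@P_d R m n d) D.+1.
Proof.
apply: (lift (c := ent i j) (b := 0) (s := u)).
- by move=> x [Px xij]; rewrite entE.
- by apply/PE; exact: uP.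
- by rewrite entE; have := u_pos i j; rewrite lt0r => /andP [].
Qed.

Lemma lower i j D : aff_dim_ge (@P_d R m n d) D.+1 -> aff_dim_ge (Fij i j) D.
Proof.
case=> [[|p0 ps] [//= [Hs [HP Hf]]]]; case: Hs => Hs.
set qq := q i j.
have qqP : Pin qq by exact: qP.
pose X := [seq p - qq | p <- p0 :: ps].
have dimV : (D.+1 <= \dim <<X>>)%N.
  have <- : \dim <<[seq p - p0 | p <- ps]>> = D.+1 by rewrite (eqP Hf) size_map.
  apply: dimvS; apply/span_subvP => y /mapP [p pps ->].
  have -> : p - p0 = (p - qq) - (p0 - qq) by rewrite opprB addrA subrK.
  apply: rpredB; apply: memv_span; rewrite /X map_cons inE; apply/orP; [right; exact: map_f | left; exact: eqxx].
pose W := (<<X>> :&: lker (phi (ent i j)))%VS.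
have dimW : (D <= \dim W)%N.
  have := limg_ker_dim (phi (ent i j)) <<X>>.
  have : (\dim (phi (ent i j) @: <<X>>) <= 1)%N.
    have := dimvS (subvf (phi (ent i j) @: <<X>>)); rewrite dimvf //.
  rewrite -/W; lia.
pose B := vbasis W.
have Bfree : free B := basis_free (vbasisP W).
have Bprops : forall b, b \in (B : seq pt) -> b i j = 0 /\
    (forall k, pairing (rowc k) b = 0) /\ (forall l, pairing (colc l) b = 0).
  move=> b /vbasis_mem /memv_capP [bX bK]; split.
    by move: bK; rewrite memv_ker phiE entE => /eqP.
  split => k; apply: (span_pairing0 _ bX) => y /mapP [p pin ->].
    by apply: rowB => //; apply/PE; apply: HP.
  by apply: colB => //; apply/PE; apply: HP.
pose w : pt := \matrix_(k, l) \sum_(b <- (B : seq pt)) `|b k l|.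
have [e [e0 He]] : exists e, 0 < e /\ forall k l, 0 <= qq k l + e * (- w) k l.
  apply: pos_step; first exact: qqP.1.
  move=> k l H; case: (boolP ((k != i) || (l != j))) => [/q_pos|].
    by rewrite -/qq H ltxx.
  rewrite negb_or !negbK => /andP [/eqP -> /eqP ->].
  rewrite !mxE big_seq big1 ?oppr0 // => b bB; by rewrite (Bprops b bB).1 normr0.
suff: aff_dim_ge (Fij i j) (\dim W) by move/aff_dim_mono; apply.
exists (qq :: [seq qq + e *: b | b <- (B : seq pt)]); split.
  by rewrite /= size_map size_tuple.
split.
  move=> x; rewrite inE => /orP [/eqP ->|/mapP [b bB ->]].
    by split; [apply/PE | exact: qij].
  have [bij [br bc]] := Bprops b bB.
  split; last by rewrite !mxE bij mulr0 addr0 !eqxx.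
  apply/PE; apply: P_step => // k l.
  have := He k l; rewrite [(- w) k l]mxE.
  have : `|b k l| <= w k l by rewrite mxE; apply: (seq_ge (F := fun b => `|b k l|)).
  have : - `|b k l| <= b k l by have := lexx `|b k l|; rewrite ler_norml => /andP [].
  move=> h1 h2 h3.
  have : e * (- w k l) <= e * b k l by rewrite ler_wpM2l ?(ltW e0) //; lra.
  lra.
rewrite /= (_ : [seq y - qq | y <- [seq qq + e *: b | b <- (B : seq pt)]] = [seq e *: b | b <- (B : seq pt)]).
  by apply: free_scale => //; rewrite gt_eqF.
by rewrite -map_comp; apply: eq_map => b /=; rewrite addrC addKr.
Qed.

Lemma facet i j : is_facet (@P_d R m n d) (Fij i j).
Proof.
split; first exact: Fface.
have [[|D] [HD HnD]] := dimP.
  exfalso; apply: HnD; apply: (upper (i := i) (j := j)).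
  apply: (dim0 (x := q i j)); split; [apply/PE; exact: qP | exact: qij].
exists D; split; first by split.
split; first exact: lower.
by move/upper.
Qed.

Lemma facet_is_F F : is_facet (@P_d R m n d) F -> exists i j, forall x, F x <-> Fij i j x.
Proof.
case=> [[c [b [Hv HF]]] [k [[HPk HnPk] [HFk HnFk]]]].
have [i [j Hij]] : exists i j, forall x, F x -> x i j = 0.
  apply: NNPP => Hn.
  have Hy : forall i j, exists y, F y /\ y i j != 0.
    move=> i j; apply: NNPP => H'; apply: Hn; exists i, j => x Fx.
    apply: NNPP => xn; apply: H'; exists x; split => //; exact/eqP.
  pose Y i j := proj1_sig (constructive_indefinite_description _ (Hy i j)).
  have HY i j : F (Y i j) /\ Y i j i j != 0 := proj2_sig (constructive_indefinite_description _ (Hy i j)).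
  pose mn : R := (m * n)%:R.
  have mn0 : mn != 0 by rewrite pnatr_eq0 muln_eq0 negb_or -!lt0n n0 andbT; have := m2; lia.
  pose z := mn^-1 *: \sum_(i < m) \sum_(j < n) Y i j.
  have avg : forall c' v, (forall i j, pairing c' (Y i j) = v) -> pairing c' z = v.
    move=> c' v Hc'; rewrite pairingZ pairing_sum (eq_bigr (fun _ => n%:R * v)) => [|i' _].
      rewrite sumr_const card_ord -mulr_natl /mn natrM; field.
      by apply/andP; split; apply/eqP => H0; move: mn0; rewrite /mn natrM H0 ?mulr0 ?mul0r eqxx.
    rewrite pairing_sum (eq_bigr (fun _ => v)) => [|j' _]; last exact: Hc'.
    by rewrite sumr_const card_ord mulr_natl.
  have YP i j : Pin (Y i j) by apply/PE; exact: ((HF _).1 (HY i j).1).1.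
  have zE k1 l1 : z k1 l1 = mn^-1 * \sum_(i < m) \sum_(j < n) Y i j k1 l1.
    by rewrite mxE summxE; congr (_ * _); apply: eq_bigr => i' _; rewrite summxE.
  have mnp : 0 < mn^-1 by rewrite invr_gt0 lt0r mn0 /= ler0n.
  have zpos k1 l1 : 0 < z k1 l1.
    rewrite zE mulr_gt0 //; apply: (lt_le_trans _ (sum2_ge (F := fun i j => Y i j k1 l1) k1 l1 _)).
      by rewrite lt0r (HY k1 l1).2; exact: (YP k1 l1).1.
    by move=> i' j'; exact: (YP i' j').1.
  have zP : Pin z.
    split; [|split].
    - by move=> k' l'; apply: ltW.
    - by move=> k'; apply: avg => i' j'; exact: (YP i' j').2.1.
    - by move=> l'; apply: avg => i' j'; exact: (YP i' j').2.2.
  have zc : pairing c z = b by apply: avg => i' j'; exact: ((HF _).1 (HY i' j').1).2.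
  have allF : forall p, P_d d p -> F p.
    move=> p Pp; have Pp' := (PE p).1 Pp.
    have zn0 : forall k1 l1, z k1 l1 = 0 -> (z - p) k1 l1 = 0.
      by move=> k1 l1 H; have := zpos k1 l1; rewrite H ltxx.
    have [e [e0 He]] := pos_step zP.1 zn0.
    have : Pin (z + e *: (z - p)).
      apply: P_step => //; [move=> k'; exact: rowB | move=> l'; exact: colB].
    move/PE => /Hv.
rewrite (pairingD c z (e *: (z - p))) (pairingZ c e (z - p)) (pairingB c z p) zc => H2.
    apply/HF; split => //; apply/eqP; rewrite eq_le Hv //=.
    have : e * (b - pairing c p) <= 0 by lra.
    by rewrite pmulr_rle0 // subr_le0.
  by apply: HnFk; apply: (aff_dim_sub allF HPk).
exists i, j => x; split.
  move=> Fx; split; [exact: ((HF x).1 Fx).1 | exact: Hij].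
move=> [Px xij]; apply/HF; split => //; apply: NNPP => Hne.
have : aff_dim_ge (Fij i j) k.+1.
  apply: (lift (c := c) (b := b) (s := x) _ (conj Px xij)); last exact: HFk.
    move=> y Fy; have [Py cy] := (HF y).1 Fy; split => //; split => //; exact: Hij.
  by apply/eqP.
by move/upper.
Qed.

Lemma Fij_inj i j k l : (forall x, Fij i j x <-> Fij k l x) -> (i, j) = (k, l).
Proof.
move=> H; apply: NNPP => ne.
have Fq : Fij i j (q i j) by split; [apply/PE; exact: qP | exact: qij].
have [_ /eqP] := (H _).1 Fq.
have : (k != i) || (l != j).
  case: (boolP ((k != i) || (l != j))) => [//|]; rewrite negb_or !negbK => /andP [/eqP ki /eqP lj]; exfalso; apply: ne; by rewrite ki lj.
by move/q_pos; rewrite lt0r => /andP [/negbTE ->].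
Qed.

Lemma main : num_facets_eq (@P_d R m n d) (m * n).
Proof.
have Hc : (m * n = #|{: 'I_m * 'I_n}|)%N by rewrite card_prod !card_ord.
pose E (t : 'I_(m * n)) : 'I_m * 'I_n := enum_val (cast_ord Hc t).
exists (fun t => Fij (E t).1 (E t).2); split; [|split].
- by move=> t; exact: facet.
- move=> t t' H; have := Fij_inj H; rewrite -!surjective_pairing => /enum_val_inj.
  exact: cast_ord_inj.
- move=> F /facet_is_F [i [j Hij]].
  exists (cast_ord (esym Hc) (enum_rank (i, j))).
  by rewrite /E cast_ordKV enum_rankK.
Qed.
End T.

Local Close Scope ring_scope.
Theorem lemma4p3 (R : realFieldType) (m n : nat) (d : 'I_m -> nat)
  (hn : n = (1 + \sum_(mu < m) d mu)%N)
  (htwo : exists mu1 mu2 : 'I_m, mu1 != mu2 /\ (1 <= d mu1)%N /\ (1 <= d mu2)%N) :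
  @num_facets_eq R m n (@P_d R m n d) (m * n).
Proof. exact: main hn htwo. Qed.
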